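(* Let $\mathcal F=(A,X,f)$ and $\mathcal G=(B,X,g)$ be fuzzy automata and let $\varphi:\mathcal F\to\mathcal G$ be an epimorphism. Then $\varphi(\mathcal F(a,w))=\mathcal G(\varphi(a),w)$ for all $a\in A$ and $w\in X^*$.
   Context: A fuzzy automaton is a triple $\mathcal F=(A,X,f)$ with $A$ a finite nonempty set of states, $X$ a finite nonempty alphabet, and $f:A\times X\times A\to[0,1]$, extended to words by $f^*(a,\varepsilon,a)=1$, $f^*(a,\varepsilon,b)=0$ ($b\neq a$), $f^*(a,vx,b)=\max_{c\in A}\min\{f^*(a,v,c),f(c,x,b)\}$ (and similarly $g^*$ for $\mathcal G$). Let $\mathcal F(a,w)=\{b\in A\mid f^*(a,w,b)>0\}$. A mapping $\varphi:A\to B$ is a homomorphism $\mathcal F\to\mathcal G$ if $g(\varphi(a),x,b)=\max\{f(a,x,a')\mid a'\in A,\ \varphi(a')=b\}$ for all $a\in A$, $b\in B$, $x\in X$ (the maximum of the empty set being $0$); it is an epimorphism if it is moreover surjective. *)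

(* Defs.v *)
From mathcomp Require Import all_boot all_order all_algebra.
Set Implicit Arguments. Unset Strict Implicit. Unset Printing Implicit Defensive.
Import Order.TTheory GRing.Theory Num.Theory.
Local Open Scope ring_scope.

Definition fuzzy_valued (R : realDomainType) (A X : finType) (f : A -> X -> A -> R) :=
  forall a x b, 0 <= f a x b <= 1.

(* one step: given the row d = f*(a, v, _), compute f*(a, v x, _):
   b |-> max_{c in A} min (d c) (f c x b) ; max of empty (unused here) = 0 *)
Definition fstep (R : realDomainType) (A X : finType) (f : A -> X -> A -> R)
  (d : A -> R) (x : X) : A -> R :=
  fun b => \big[Num.max/0]_(c : A) Num.min (d c) (f c x b).

Definition fstar (R : realDomainType) (A X : finType) (f : A -> X -> A -> R)
  (a : A) (w : seq X) : A -> R :=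
  foldl (fstep f) (fun b => if b == a then 1 else 0) w.

Definition reach (R : realDomainType) (A X : finType) (f : A -> X -> A -> R)
  (a : A) (w : seq X) : {set A} :=
  [set b | 0 < fstar f a w b].

Definition fa_hom (R : realDomainType) (A B X : finType)
  (f : A -> X -> A -> R) (g : B -> X -> B -> R) (phi : A -> B) :=
  forall (a : A) (b : B) (x : X),
    g (phi a) x b = \big[Num.max/0]_(a' : A | phi a' == b) f a x a'.

Definition fa_epi (R : realDomainType) (A B X : finType)
  (f : A -> X -> A -> R) (g : B -> X -> B -> R) (phi : A -> B) :=
  fa_hom f g phi /\ (forall b : B, exists a : A, phi a = b).

(* Main.v *)
Require Import Defs.
From mathcomp Require Import all_boot all_order all_algebra.
Import Order.TTheory GRing.Theory Num.Theory.
Local Open Scope ring_scope.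

Lemma bigmax_pos (R : realDomainType) (I : finType) (P : pred I) (F : I -> R) :
  (0 < \big[Num.max/0]_(i | P i) F i) = [exists i, P i && (0 < F i)].
Proof.
apply/idP/existsP.
  move=> H; apply/existsP; apply: contraLR H; rewrite negb_exists => /forallP H.
  rewrite -leNgt; apply: (big_ind (fun x => x <= 0)) => //.
    by move=> x y hx hy; rewrite ge_max hx hy.
  by move=> i Pi; move: (H i); rewrite Pi /= -leNgt.
move=> [i /andP[Pi Fi]]; rewrite (bigD1 i) //=.
by rewrite lt_max Fi.
Qed.

Lemma fstep_pos (R : realDomainType) (A X : finType) (f : A -> X -> A -> R)
  d x b : (0 < fstep f d x b) = [exists c, (0 < d c) && (0 < f c x b)].
Proof.
rewrite /fstep bigmax_pos; apply/existsP/existsP => -[c Hc]; exists c; move: Hc;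
by rewrite lt_min.
Qed.

Theorem lemma6p3 (R : realDomainType) (A B X : finType)
  (f : A -> X -> A -> R) (g : B -> X -> B -> R) (phi : A -> B) :
  (0 < #|A|)%N -> (0 < #|B|)%N -> (0 < #|X|)%N ->
  fuzzy_valued f -> fuzzy_valued g ->
  fa_epi f g phi ->
  forall (a : A) (w : seq X), phi @: reach f a w = reach g (phi a) w.
Proof.
move=> _ _ _ _ _ [hom _] a w.
elim/last_ind: w => [|v x IH].
  apply/setP => b; rewrite /reach /fstar /=.
  have -> : [set b0 | 0 < (if b0 == a then 1 else 0 : R)] = [set a].
    by apply/setP => c; rewrite !inE; case: (c == a); rewrite ?ltr01 ?ltxx.
  by rewrite imset_set1 !inE; case: (b == phi a); rewrite ?ltr01 ?ltxx.
apply/setP => b'; rewrite /reach /fstar !foldl_rcons -/(fstar f a v) -/(fstar g (phi a) v).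
rewrite inE fstep_pos.
apply/imsetP/existsP.
  move=> [a' ]; rewrite inE fstep_pos => /existsP [c /andP [Hc Hf]] ->.
  exists (phi c); apply/andP; split.
    have : phi c \in phi @: reach f a v by apply: imset_f; rewrite inE.
    by rewrite IH inE.
  by rewrite hom bigmax_pos; apply/existsP; exists a'; rewrite eqxx Hf.
move=> [c' /andP [Hc' Hg]].
have : c' \in reach g (phi a) v by rewrite inE.
rewrite -IH => /imsetP [c]; rewrite inE => Hc Ec; subst c'.
move: Hg; rewrite hom bigmax_pos => /existsP [a' /andP [/eqP <- Hf]].
exists a' => //; rewrite inE fstep_pos; apply/existsP; exists c; by rewrite Hc Hf.
Qed.
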